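(* Let $d>0$, let $\mathcal{S}$ be the 4-PAM constellation labeled by any Gray labeling, and let $\mathcal{B}$ be any rate-$1/2$ binary convolutional code generated by $\boldsymbol{G}(D)=[g_1(D),\,g_2(D)]$ with $g_1(D),g_2(D)$ nonzero binary polynomials. Then $\mathsf{L}(\mathcal{B})=0$.
   Context: $\mathcal{S}=\{s_1,s_2,s_3,s_4\}$ with $s_1=-3d$, $s_2=-d$, $s_3=d$, $s_4=3d$. A labeling is a bijection $\Phi_{\mathcal{S}}:\{0,1\}^2\to\mathcal{S}$, described by $\boldsymbol{q}=[q_1,\dots,q_4]$ where $q_i$ is the integer whose two-bit representation (most significant bit first) is $\Phi_{\mathcal{S}}^{-1}(s_i)$; the Gray labelings are $[0,1,3,2]$, $[0,2,3,1]$, $[1,0,2,3]$, $[2,0,1,3]$. The convolutional code $\mathcal{B}$ consists of the sequences $\boldsymbol{b}=(\boldsymbol{b}[k])_k$, $\boldsymbol{b}[k]=[b_1[k],b_2[k]]$, whose odd bits $b_1(D)=u(D)g_1(D)$ and even bits $b_2(D)=u(D)g_2(D)$, as $u(D)$ ranges over binary formal Laurent series (the same code is generated by $[1,\,g_2(D)/g_1(D)]$ and by $[g_1(D)/g_2(D),\,1]$). The CM code is $\mathcal{X}=\{(\Phi_{\mathcal{S}}(\boldsymbol{b}[k]))_k:\boldsymbol{b}\in\mathcal{B}\}$. For symbol sequences $\boldsymbol{x},\hat{\boldsymbol{x}}$ and each position $k$ with $x[k]\neq\hat{x}[k]$: $\mu^{\mathcal{X}}_k=\sigma^{2,\mathcal{X}}_k=(x[k]-\hat{x}[k])^2/(4d^2)$;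 $\mu^{\mathcal{B}}_k=\sigma^{2,\mathcal{B}}_k=(x[k]-\hat{x}[k])^2/(4d^2)$ except that if $\{x[k],\hat{x}[k]\}=\{s_1,s_4\}$ then $\mu^{\mathcal{B}}_k=3$, $\sigma^{2,\mathcal{B}}_k=1$. Summing over $k$ with $x[k]\neq\hat{x}[k]$, $a^{\mathcal{X}}(\boldsymbol{x},\hat{\boldsymbol{x}})=\sum_k\mu^{\mathcal{X}}_k/\sqrt{\sum_k\sigma^{2,\mathcal{X}}_k}$ and $a^{\mathcal{B}}(\boldsymbol{x},\hat{\boldsymbol{x}})=\sum_k\mu^{\mathcal{B}}_k/\sqrt{\sum_k\sigma^{2,\mathcal{B}}_k}$ (taken to be $+\infty$ if the sequences differ in infinitely many positions). The asymptotic loss of the code is $\mathsf{L}(\mathcal{B})=20\log_{10}\Big(\min_{\boldsymbol{x}\neq\hat{\boldsymbol{x}}\in\mathcal{X}}a^{\mathcal{X}}(\boldsymbol{x},\hat{\boldsymbol{x}})\big/\min_{\boldsymbol{x}\neq\hat{\boldsymbol{x}}\in\mathcal{X}}a^{\mathcal{B}}(\boldsymbol{x},\hat{\boldsymbol{x}})\Big)$ dB. *)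

(* Defs.v *)
From Stdlib Require Import Reals ZArith List.
Import ListNotations.
Open Scope R_scope.

(* 4-PAM symbols s_1..s_4 = -3d,-d,d,3d, indexed 0..3: sym d i = (2i-3)d *)
Definition sym (d : R) (i : nat) : R := (2 * INR i - 3) * d.

(* Labelings q = [q_1;...;q_4]; the four Gray labelings *)
Definition GrayLabelings : list (list nat) :=
  [[0;1;3;2]; [0;2;3;1]; [1;0;2;3]; [2;0;1;3]]%nat.

Fixpoint idx (v : nat) (q : list nat) : nat :=
  match q with
  | [] => 0%nat
  | a :: q' => if Nat.eqb a v then 0%nat else S (idx v q')
  end.

(* Phi_S([b1,b2]) = s_i where q_i is the integer with bits b1 (MSB) b2 *)
Definition Phi (q : list nat) (d : R) (b1 b2 : bool) : R :=
  sym d (idx (2 * Nat.b2n b1 + Nat.b2n b2)%nat q).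

Definition laurent (u : Z -> bool) : Prop :=
  exists N : Z, forall k : Z, (k < N)%Z -> u k = false.

(* binary polynomial g = [g_0; g_1; ...] (coefficient of D^i at position i);
   (g(D) u(D))_k = XOR_i g_i u_{k-i} *)
Fixpoint conv (g : list bool) (u : Z -> bool) (k : Z) : bool :=
  match g with
  | [] => false
  | c :: g' => xorb (c && u k) (conv g' u (k - 1)%Z)
  end.

Definition poly_nonzero (g : list bool) : Prop := In true g.

Definition CMcode (q : list nat) (d : R) (g1 g2 : list bool) (x : Z -> R) : Prop :=
  exists u : Z -> bool, laurent u /\
    forall k : Z, x k = Phi q d (conv g1 u k) (conv g2 u k).

Definition muX (d : R) (x xh : Z -> R) (k : Z) : R :=
  (x k - xh k) ^ 2 / (4 * d ^ 2).
Definition sigX (d : R) (x xh : Z -> R) (k : Z) : R := muX d x xh k.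

Definition is_s1s4 (d : R) (a b : R) : bool :=
  if Req_EM_T a (sym d 0) then (if Req_EM_T b (sym d 3) then true else false)
  else if Req_EM_T a (sym d 3) then (if Req_EM_T b (sym d 0) then true else false)
  else false.

Definition muB (d : R) (x xh : Z -> R) (k : Z) : R :=
  if is_s1s4 d (x k) (xh k) then 3 else (x k - xh k) ^ 2 / (4 * d ^ 2).
Definition sigB (d : R) (x xh : Z -> R) (k : Z) : R :=
  if is_s1s4 d (x k) (xh k) then 1 else (x k - xh k) ^ 2 / (4 * d ^ 2).

(* sum of f k over k = -K..K *)
Definition sumZ (K : nat) (f : Z -> R) : R :=
  fold_right Rplus 0
    (map (fun n : nat => f (Z.of_nat n - Z.of_nat K)%Z) (seq 0 (2 * K + 1))).

Definition diff_within (x xh : Z -> R) (K : nat) : Prop :=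
  forall k : Z, (Z.of_nat K < Z.abs k)%Z -> x k = xh k.

(* a^X and a^B computed on a window [-K,K] containing all differing positions
   (the value does not depend on such K) *)
Definition aX (d : R) (x xh : Z -> R) (K : nat) : R :=
  sumZ K (muX d x xh) / sqrt (sumZ K (sigX d x xh)).
Definition aB (d : R) (x xh : Z -> R) (K : nat) : R :=
  sumZ K (muB d x xh) / sqrt (sumZ K (sigB d x xh)).

(* m is the minimum of A over pairs x <> xh in the code C.  Pairs differing in
   infinitely many positions have value +oo and so never undercut m. *)
Definition IsMin (A : (Z -> R) -> (Z -> R) -> nat -> R)
                 (C : (Z -> R) -> Prop) (m : R) : Prop :=
  (exists x xh K, C x /\ C xh /\ x <> xh /\ diff_within x xh K /\ A x xh K = m) /\
  (forall x xh K, C x -> C xh -> x <> xh -> diff_within x xh K -> m <= A x xh K).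

Definition log10 (x : R) : R := ln x / ln 10.

Definition Loss (mX mB : R) : R := 20 * log10 (mX / mB).

(* Main.v *)
Require Import Defs.
From Stdlib Require Import Reals ZArith List Lia Lra Psatz Classical FunctionalExtensionality.
Import ListNotations.
Open Scope R_scope.
Local Open Scope bool_scope.

Definition lab (b1 b2 : bool) : nat := (2 * Nat.b2n b1 + Nat.b2n b2)%nat.
Definition wN (e1 e2 : bool) : nat :=
  if e1 && e2 then 4%nat else if e1 || e2 then 1%nat else 0%nat.
Definition badb (q : list nat) (b1 b2 c1 c2 : bool) : bool :=
  let i := idx (lab b1 b2) q in let j := idx (lab c1 c2) q in
  (Nat.eqb i 0 && Nat.eqb j 3) || (Nat.eqb i 3 && Nat.eqb j 0).

Lemma sym_inj d i j : 0 < d -> sym d i = sym d j -> i = j.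
Proof. intros Hd H. unfold sym in H. apply INR_eq. nra. Qed.

Lemma Req_sym {A} d i j (X Y : A) : 0 < d ->
  (if Req_EM_T (sym d i) (sym d j) then X else Y) = if Nat.eqb i j then X else Y.
Proof.
  intros Hd. destruct (Req_EM_T _ _) as [E|E]; destruct (Nat.eqb_spec i j); auto.
  - apply sym_inj in E; auto. contradiction.
  - subst. contradiction.
Qed.

Lemma is_s1s4_sym d i j : 0 < d -> is_s1s4 d (sym d i) (sym d j) =
  (Nat.eqb i 0 && Nat.eqb j 3) || (Nat.eqb i 3 && Nat.eqb j 0).
Proof.
  intros Hd. unfold is_s1s4. rewrite !Req_sym by exact Hd.
  repeat match goal with |- context [Nat.eqb ?a ?b] =>
    destruct (Nat.eqb_spec a b); subst end; simpl; try reflexivity; lia.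
Qed.

Lemma sq_sym d i j : 0 < d -> (sym d i - sym d j)^2 / (4 * d^2) = (INR i - INR j)^2.
Proof. intros Hd. unfold sym. field. lra. Qed.

Lemma pos q d b1 b2 c1 c2 : 0 < d -> In q GrayLabelings ->
  is_s1s4 d (Phi q d b1 b2) (Phi q d c1 c2) = badb q b1 b2 c1 c2 /\
  (Phi q d b1 b2 - Phi q d c1 c2)^2 / (4 * d^2) =
     INR (wN (xorb b1 c1) (xorb b2 c2)) + 8 * INR (Nat.b2n (badb q b1 b2 c1 c2)) /\
  (badb q b1 b2 c1 c2 = true -> wN (xorb b1 c1) (xorb b2 c2) = 1%nat) /\
  (Phi q d b1 b2 = Phi q d c1 c2 <-> b1 = c1 /\ b2 = c2).
Proof.
  intros Hd Hq. unfold Phi. rewrite is_s1s4_sym, sq_sym by exact Hd.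
  split; [reflexivity|].
  assert (Hi : sym d (idx (2 * Nat.b2n b1 + Nat.b2n b2) q) = sym d (idx (2 * Nat.b2n c1 + Nat.b2n c2) q) <->
     idx (2 * Nat.b2n b1 + Nat.b2n b2) q = idx (2 * Nat.b2n c1 + Nat.b2n c2) q).
  { split; [apply sym_inj; exact Hd | intros ->; reflexivity]. }
  rewrite Hi.
  destruct Hq as [<-|[<-|[<-|[<-|[]]]]];
  destruct b1, b2, c1, c2; simpl;
  (split; [ring|split; [try discriminate; auto| split; intros H; try discriminate; try (destruct H; discriminate); auto]]).
Qed.

Definition coef (g : list bool) (z : Z) : bool :=
  if (z <? 0)%Z then false else nth (Z.to_nat z) g false.

Lemma conv_delta g r k : conv g (fun i => Z.eqb i r) k = coef g (k - r).
Proof.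
  revert k; induction g as [|c g IH]; intros k; simpl.
  - unfold coef. destruct (_ <? 0)%Z; [reflexivity| destruct (Z.to_nat _); reflexivity].
  - rewrite IH. unfold coef.
    destruct (Z.ltb_spec (k - r) 0).
    + rewrite (proj2 (Z.eqb_neq k r)) by lia.
      destruct (Z.ltb_spec (k-1-r) 0); [|lia]. destruct c; reflexivity.
    + destruct (Z.eq_dec k r).
      * subst. rewrite Z.eqb_refl. replace (r - r)%Z with 0%Z by lia.
        destruct (Z.ltb_spec (r-1-r) 0); [|lia]. simpl. destruct c; reflexivity.
      * rewrite (proj2 (Z.eqb_neq k r)) by lia.
        destruct (Z.ltb_spec (k-1-r) 0); [lia|].
        replace (Z.to_nat (k - r)) with (S (Z.to_nat (k-1-r))) by lia.
        simpl. destruct c; reflexivity.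
Qed.

Lemma conv_xor g u v k :
  conv g (fun i => xorb (u i) (v i)) k = xorb (conv g u k) (conv g v k).
Proof.
  revert k; induction g as [|c g IH]; intros k; simpl; [reflexivity|].
  rewrite IH. destruct c, (u k), (v k), (conv g u (k-1)%Z), (conv g v (k-1)%Z); reflexivity.
Qed.

Lemma conv_zero g k : conv g (fun _ => false) k = false.
Proof.
  revert k; induction g as [|c g IH]; intros k; simpl; [reflexivity|].
  rewrite IH. destruct c; reflexivity.
Qed.

Lemma first_true g : In true g ->
  exists j, nth j g false = true /\ forall i, (i < j)%nat -> nth i g false = false.
Proof.
  induction g as [|c g IH]; simpl; [tauto|]. intros H.
  destruct c.
  - exists 0%nat. split; [reflexivity| intros; lia].
  - destruct H as [H|H]; [discriminate|].
    destruct (IH H) as [j [Hj Hl]]. exists (S j). split; [exact Hj|].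
    intros [|i] Hi; [reflexivity|]. apply Hl. lia.
Qed.

Lemma coef_out g z : (Z.of_nat (length g) <= z)%Z \/ (z < 0)%Z -> coef g z = false.
Proof.
  intros H. unfold coef. destruct (Z.ltb_spec z 0); [reflexivity|].
  apply nth_overflow. lia.
Qed.

Lemma laurent_xor u v : laurent u -> laurent v -> laurent (fun k => xorb (u k) (v k)).
Proof.
  intros [N HN] [M HM]. exists (Z.min N M). intros k Hk.
  rewrite HN, HM by lia. reflexivity.
Qed.

Lemma control g (Hg : poly_nonzero g) (t : Z -> bool) (A : Z) (n : nat) :
  exists w, laurent w /\ forall k, (A <= k < A + Z.of_nat n)%Z -> conv g w k = t k.
Proof.
  destruct (first_true g Hg) as [j [Hj Hlt]].
  induction n as [|n [w [Hw Hc]]].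
  - exists (fun _ => false). split. exists 0%Z; auto. intros; lia.
  - set (p := (A + Z.of_nat n)%Z).
    destruct (Bool.bool_dec (conv g w p) (t p)) as [E|E].
    + exists w. split; auto. intros k Hk.
      destruct (Z.eq_dec k p); [subst; auto| apply Hc; lia].
    + exists (fun i => xorb (w i) (Z.eqb i (p - Z.of_nat j))). split.
      * destruct Hw as [N HN]. exists (Z.min N (p - Z.of_nat j)). intros k Hk.
        rewrite HN by lia. rewrite (proj2 (Z.eqb_neq _ _)) by lia. reflexivity.
      * intros k Hk. rewrite (conv_xor g w (fun i => Z.eqb i (p - Z.of_nat j))), conv_delta.
        destruct (Z.eq_dec k p).
        -- subst k. replace (p - (p - Z.of_nat j))%Z with (Z.of_nat j) by lia.
           unfold coef. destruct (Z.ltb_spec (Z.of_nat j) 0); [lia|].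
           rewrite Nat2Z.id, Hj. destruct (conv g w p), (t p); simpl; congruence.
        -- rewrite Hc by lia. unfold coef.
           destruct (Z.ltb_spec (k - (p - Z.of_nat j)) 0).
           ++ apply Bool.xorb_false_r.
           ++ rewrite Hlt by lia. apply Bool.xorb_false_r.
Qed.

Lemma win K n : In n (seq 0 (2*K+1)) -> (Z.abs (Z.of_nat n - Z.of_nat K) <= Z.of_nat K)%Z.
Proof. rewrite in_seq. lia. Qed.

Lemma sumZ_ext_win K f g : (forall k, (Z.abs k <= Z.of_nat K)%Z -> f k = g k) -> sumZ K f = sumZ K g.
Proof. intros H. unfold sumZ. f_equal. apply map_ext_in. intros n Hn. apply H, win, Hn. Qed.

Lemma sumZ_ext K f g : (forall k, f k = g k) -> sumZ K f = sumZ K g.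
Proof. intros H. apply sumZ_ext_win. auto. Qed.

Lemma sumZ_lin K f g c : sumZ K (fun k => f k + c * g k) = sumZ K f + c * sumZ K g.
Proof. unfold sumZ. induction (seq 0 (2*K+1)); simpl; [ring| rewrite IHl; ring]. Qed.

Lemma sumZ_nonneg K f : (forall k, 0 <= f k) -> 0 <= sumZ K f.
Proof.
  intros H. unfold sumZ. induction (seq 0 (2*K+1)); simpl; [lra|].
  specialize (H (Z.of_nat a - Z.of_nat K)%Z); lra.
Qed.

Lemma sumZ_ge K f k : (forall k, 0 <= f k) -> (Z.abs k <= Z.of_nat K)%Z -> f k <= sumZ K f.
Proof.
  intros H Hk. unfold sumZ.
  assert (Hin : In (Z.to_nat (k + Z.of_nat K)) (seq 0 (2*K+1))) by (rewrite in_seq; lia).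
  assert (E: k = (Z.of_nat (Z.to_nat (k + Z.of_nat K)) - Z.of_nat K)%Z) by lia.
  revert Hin. generalize (seq 0 (2*K+1)). intros l; induction l as [|a l IH]; simpl; intros Hin; [easy|].
  assert (Hn : 0 <= fold_right Rplus 0 (map (fun n => f (Z.of_nat n - Z.of_nat K)%Z) l)).
  { clear -H. induction l; simpl; [lra|]. specialize (H (Z.of_nat a - Z.of_nat K)%Z). lra. }
  destruct Hin as [Ha|Hin].
  - rewrite Ha, <- E. lra.
  - specialize (IH Hin). specialize (H (Z.of_nat a - Z.of_nat K)%Z). lra.
Qed.

Lemma sumZ_nat K (f : Z -> nat) : exists n, sumZ K (fun k => INR (f k)) = INR n.
Proof.
  unfold sumZ. induction (seq 0 (2*K+1)) as [|a l [n IH]]; simpl.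
  - exists 0%nat; reflexivity.
  - exists (f (Z.of_nat a - Z.of_nat K)%Z + n)%nat. rewrite plus_INR, IH. reflexivity.
Qed.

Lemma div_sqrt t : 0 < t -> t / sqrt t = sqrt t.
Proof.
  intros Ht. assert (Hs : 0 < sqrt t) by (apply sqrt_lt_R0; lra).
  rewrite <- (sqrt_sqrt t) at 1 by lra. field. lra.
Qed.

Lemma least_nat (P : nat -> Prop) : (exists n, P n) -> exists m, P m /\ forall n, P n -> (m <= n)%nat.
Proof.
  intros [n Hn]. revert Hn. induction n as [n IH] using lt_wf_ind. intros Hn.
  destruct (classic (exists k, (k < n)%nat /\ P k)) as [[k [Hk Pk]]|Hno].
  - exact (IH k Hk Pk).
  - exists n. split; auto. intros n' Pn'. destruct (Nat.lt_ge_cases n' n); auto.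
    exfalso; apply Hno; eauto.
Qed.

Lemma pair_facts q d g1 g2 u uh x xh : 0 < d -> In q GrayLabelings ->
  (forall k, x k = Phi q d (conv g1 u k) (conv g2 u k)) ->
  (forall k, xh k = Phi q d (conv g1 uh k) (conv g2 uh k)) -> forall k,
  sigB d x xh k = INR (wN (xorb (conv g1 u k) (conv g1 uh k)) (xorb (conv g2 u k) (conv g2 uh k))) /\
  muX d x xh k = INR (wN (xorb (conv g1 u k) (conv g1 uh k)) (xorb (conv g2 u k) (conv g2 uh k)))
     + 8 * INR (Nat.b2n (badb q (conv g1 u k) (conv g2 u k) (conv g1 uh k) (conv g2 uh k))) /\
  muB d x xh k = INR (wN (xorb (conv g1 u k) (conv g1 uh k)) (xorb (conv g2 u k) (conv g2 uh k)))
     + 2 * INR (Nat.b2n (badb q (conv g1 u k) (conv g2 u k) (conv g1 uh k) (conv g2 uh k))) /\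
  (x k = xh k <-> conv g1 u k = conv g1 uh k /\ conv g2 u k = conv g2 uh k).
Proof.
  intros Hd Hq Hx Hxh k.
  unfold sigB, muB, muX. rewrite Hx, Hxh.
  destruct (pos q d (conv g1 u k) (conv g2 u k) (conv g1 uh k) (conv g2 uh k) Hd Hq)
    as [H1 [H2 [H3 H4]]].
  rewrite H1, H2. split; [|split; [reflexivity|split; [|exact H4]]];
  destruct (badb _ _ _ _ _); simpl; try (rewrite H3 by reflexivity; simpl); lra.
Qed.

Lemma wN_pos a b c e : (a <> b \/ c <> e) -> (1 <= wN (xorb a b) (xorb c e))%nat.
Proof. unfold wN; destruct a, b, c, e; simpl; intros [H|H]; try lia; exfalso; apply H; reflexivity. Qed.

Lemma sel q : In q GrayLabelings -> exists s v : bool, forall b1 b2 c1 c2,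
  (if s then b1 else b2) = v -> badb q b1 b2 c1 c2 = false.
Proof.
  intros Hq. destruct Hq as [<-|[<-|[<-|[<-|[]]]]].
  - exists false, true. intros b1 b2 c1 c2 H; subst; destruct b1, c1, c2; reflexivity.
  - exists true, true. intros b1 b2 c1 c2 H; subst; destruct b2, c1, c2; reflexivity.
  - exists false, false. intros b1 b2 c1 c2 H; subst; destruct b1, c1, c2; reflexivity.
  - exists true, false. intros b1 b2 c1 c2 H; subst; destruct b2, c1, c2; reflexivity.
Qed.

Definition Pn q d g1 g2 (n : nat) : Prop :=
  exists x xh K, CMcode q d g1 g2 x /\ CMcode q d g1 g2 xh /\ x <> xh /\
    diff_within x xh K /\ sumZ K (sigB d x xh) = INR n.

Lemma exists_diff (x xh : Z -> R) K : x <> xh -> diff_within x xh K ->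
  exists k, (Z.abs k <= Z.of_nat K)%Z /\ x k <> xh k.
Proof.
  intros Hne Hd. apply NNPP. intros Hno. apply Hne. apply functional_extensionality.
  intros k. apply NNPP. intros Hk. destruct (Z_le_gt_dec (Z.abs k) (Z.of_nat K)).
  - apply Hno. eauto.
  - apply Hk, Hd. lia.
Qed.

Lemma lower q d g1 g2 x xh K : 0 < d -> In q GrayLabelings ->
  CMcode q d g1 g2 x -> CMcode q d g1 g2 xh -> x <> xh -> diff_within x xh K ->
  exists n, sumZ K (sigB d x xh) = INR n /\ 0 < INR n /\
    sqrt (INR n) <= aX d x xh K /\ sqrt (INR n) <= aB d x xh K.
Proof.
  intros Hd Hq [u [Hu Hx]] [uh [Huh Hxh]] Hne Hdiff.
  pose proof (pair_facts q d g1 g2 u uh x xh Hd Hq Hx Hxh) as PF.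
  set (f := fun k => wN (xorb (conv g1 u k) (conv g1 uh k)) (xorb (conv g2 u k) (conv g2 uh k))).
  set (b := fun k => Nat.b2n (badb q (conv g1 u k) (conv g2 u k) (conv g1 uh k) (conv g2 uh k))).
  assert (ES : sumZ K (sigB d x xh) = sumZ K (fun k => INR (f k))).
  { apply sumZ_ext. intros k. apply (PF k). }
  assert (EX : sumZ K (muX d x xh) = sumZ K (fun k => INR (f k)) + 8 * sumZ K (fun k => INR (b k))).
  { rewrite <- sumZ_lin. apply sumZ_ext. intros k. apply (PF k). }
  assert (EB : sumZ K (muB d x xh) = sumZ K (fun k => INR (f k)) + 2 * sumZ K (fun k => INR (b k))).
  { rewrite <- sumZ_lin. apply sumZ_ext. intros k. apply (PF k). }
  assert (C0 : 0 <= sumZ K (fun k => INR (b k))) by (apply sumZ_nonneg; intros; apply pos_INR).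
  destruct (sumZ_nat K f) as [n En].
  exists n. rewrite ES, En in *.
  assert (Hpos : 0 < INR n).
  { destruct (exists_diff x xh K Hne Hdiff) as [k [Hk Hne']].
    assert (H1 : (1 <= f k)%nat).
    { unfold f. apply wN_pos. destruct (PF k) as [_ [_ [_ Hi]]].
      destruct (Bool.bool_dec (conv g1 u k) (conv g1 uh k)); [|auto].
      destruct (Bool.bool_dec (conv g2 u k) (conv g2 uh k)); [|auto].
      exfalso. apply Hne', Hi. auto. }
    apply le_INR in H1. simpl in H1.
    pose proof (sumZ_ge K (fun k => INR (f k)) k (fun k => pos_INR _) Hk). lra. }
  split; [reflexivity|]. split; [exact Hpos|].
  assert (EX2 : sumZ K (sigX d x xh) = INR n + 8 * sumZ K (fun k => INR (b k)))
    by (rewrite <- EX; reflexivity).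
  unfold aX, aB. rewrite EX, EX2, EB, ES. split.
  - rewrite div_sqrt by lra. apply sqrt_le_1_alt. lra.
  - rewrite <- (div_sqrt (INR n)) at 1 by lra.
    unfold Rdiv. apply Rmult_le_compat_r; [|lra].
    left. apply Rinv_0_lt_compat, sqrt_lt_R0. lra.
Qed.

Lemma xorb_cancel a b c : xorb (xorb a c) (xorb b c) = xorb a b.
Proof. destruct a, b, c; reflexivity. Qed.

Lemma xorb_eq_iff a b c : xorb a c = xorb b c <-> a = b.
Proof. destruct a, b, c; simpl; split; congruence. Qed.

Lemma construct q d g1 g2 m : 0 < d -> In q GrayLabelings ->
  poly_nonzero g1 -> poly_nonzero g2 -> Pn q d g1 g2 m ->
  0 < INR m /\ exists x xh K, CMcode q d g1 g2 x /\ CMcode q d g1 g2 xh /\ x <> xh /\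
    diff_within x xh K /\ aX d x xh K = sqrt (INR m) /\ aB d x xh K = sqrt (INR m).
Proof.
  intros Hd Hq Hg1 Hg2 [x [xh [K [Cx [Cxh [Hne [Hdiff HS]]]]]]].
  destruct (lower q d g1 g2 x xh K Hd Hq Cx Cxh Hne Hdiff) as [n [En [Hn _]]].
  assert (Hm : 0 < INR m) by congruence. split; [exact Hm|].
  destruct Cx as [u [Hu Hx]], Cxh as [uh [Huh Hxh]].
  destruct (sel q Hq) as [s [v Hsel]].
  set (gs := if s then g1 else g2).
  assert (Hgs : poly_nonzero gs) by (unfold gs; destruct s; auto).
  destruct (control gs Hgs (fun k => xorb (conv gs u k) v) (- Z.of_nat K) (2 * K + 1))
    as [w [Hw Hc]].
  set (u' := fun k => xorb (u k) (w k)).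
  set (uh' := fun k => xorb (uh k) (w k)).
  set (x' := fun k => Phi q d (conv g1 u' k) (conv g2 u' k)).
  set (xh' := fun k => Phi q d (conv g1 uh' k) (conv g2 uh' k)).
  pose proof (pair_facts q d g1 g2 u uh x xh Hd Hq Hx Hxh) as PF.
  pose proof (pair_facts q d g1 g2 u' uh' x' xh' Hd Hq (fun k => eq_refl) (fun k => eq_refl)) as PF'.
  assert (Cv : forall g k, conv g u' k = xorb (conv g u k) (conv g w k) /\
                           conv g uh' k = xorb (conv g uh k) (conv g w k)).
  { intros g k. split; apply conv_xor. }
  assert (Esig : forall k, sigB d x' xh' k = sigB d x xh k).
  { intros k. rewrite (proj1 (PF' k)), (proj1 (PF k)).
    destruct (Cv g1 k) as [-> ->], (Cv g2 k) as [-> ->]. rewrite !xorb_cancel. reflexivity. }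
  assert (Eeq : forall k, x' k = xh' k <-> x k = xh k).
  { intros k. rewrite (proj2 (proj2 (proj2 (PF' k)))), (proj2 (proj2 (proj2 (PF k)))).
    destruct (Cv g1 k) as [-> ->], (Cv g2 k) as [-> ->]. rewrite !xorb_eq_iff. tauto. }
  assert (Hbad : forall k, (Z.abs k <= Z.of_nat K)%Z ->
     badb q (conv g1 u' k) (conv g2 u' k) (conv g1 uh' k) (conv g2 uh' k) = false).
  { intros k Hk. apply Hsel. specialize (Hc k ltac:(lia)). unfold gs in Hc.
    destruct s; rewrite (proj1 (Cv _ k)), Hc; destruct (conv _ u k), v; reflexivity. }
  assert (Hwin : forall k, (Z.abs k <= Z.of_nat K)%Z ->
     muX d x' xh' k = sigB d x xh k /\ muB d x' xh' k = sigB d x xh k).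
  { intros k Hk. rewrite <- Esig. destruct (PF' k) as [E1 [E2 [E3 _]]].
    rewrite E1, E2, E3, (Hbad k Hk). simpl. split; ring. }
  exists x', xh', K. split; [exists u'; split; [apply laurent_xor; auto| reflexivity]|].
  split; [exists uh'; split; [apply laurent_xor; auto| reflexivity]|].
  split.
  { intros E. apply Hne. apply functional_extensionality. intros k. apply Eeq. rewrite E. reflexivity. }
  split.
  { intros k Hk. apply Eeq. apply Hdiff. exact Hk. }
  assert (SX : sumZ K (sigX d x' xh') = INR m).
  { rewrite <- HS. apply sumZ_ext_win. intros k Hk. apply (Hwin k Hk). }
  assert (SX' : sumZ K (muX d x' xh') = INR m) by (rewrite <- SX; reflexivity).
  assert (SB : sumZ K (muB d x' xh') = INR m).
  { rewrite <- HS. apply sumZ_ext_win. intros k Hk. apply (Hwin k Hk). }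
  assert (SB' : sumZ K (sigB d x' xh') = INR m).
  { rewrite <- HS. apply sumZ_ext. exact Esig. }
  unfold aX, aB. rewrite SX, SX', SB, SB'. rewrite div_sqrt by exact Hm. split; reflexivity.
Qed.

Lemma nonempty q d g1 g2 : 0 < d -> In q GrayLabelings ->
  poly_nonzero g1 -> poly_nonzero g2 -> exists n, Pn q d g1 g2 n.
Proof.
  intros Hd Hq Hg1 Hg2.
  set (u := fun i => Z.eqb i 0).
  set (x := fun k => Phi q d (conv g1 u k) (conv g2 u k)).
  set (xh := fun k => Phi q d (conv g1 (fun _ => false) k) (conv g2 (fun _ => false) k)).
  set (K := (length g1 + length g2)%nat).
  assert (Cx : CMcode q d g1 g2 x).
  { exists u. split; [|reflexivity]. exists 0%Z. intros k Hk. unfold u.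
    apply Z.eqb_neq. lia. }
  assert (Cxh : CMcode q d g1 g2 xh).
  { exists (fun _ => false). split; [|reflexivity]. exists 0%Z. auto. }
  pose proof (pair_facts q d g1 g2 u (fun _ => false) x xh Hd Hq (fun k => eq_refl) (fun k => eq_refl)) as PF.
  assert (Hne : x <> xh).
  { destruct (first_true g1 Hg1) as [j [Hj _]].
    intros E. destruct (proj1 (proj2 (proj2 (proj2 (PF (Z.of_nat j))))) ltac:(rewrite E; reflexivity)) as [E1 _].
    unfold u in E1. rewrite conv_delta, conv_zero in E1. unfold coef in E1.
    destruct (Z.ltb_spec (Z.of_nat j - 0) 0); [lia|].
    replace (Z.to_nat (Z.of_nat j - 0)) with j in E1 by lia. congruence. }
  assert (Hdiff : diff_within x xh K).
  { intros k Hk. unfold x, xh, u. rewrite !conv_delta, !conv_zero.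
    rewrite !coef_out by (unfold K in Hk; lia). reflexivity. }
  destruct (lower q d g1 g2 x xh K Hd Hq Cx Cxh Hne Hdiff) as [n [En _]].
  exists n, x, xh, K. auto.
Qed.

Theorem theorem4 (d : R) (q : list nat) (g1 g2 : list bool) :
  0 < d ->
  In q GrayLabelings ->
  poly_nonzero g1 -> poly_nonzero g2 ->
  exists mX mB : R,
    IsMin (aX d) (CMcode q d g1 g2) mX /\
    IsMin (aB d) (CMcode q d g1 g2) mB /\
    Loss mX mB = 0.
Proof.
  intros Hd Hq Hg1 Hg2.
  destruct (least_nat _ (nonempty q d g1 g2 Hd Hq Hg1 Hg2)) as [m [Pm Hmin]].
  destruct (construct q d g1 g2 m Hd Hq Hg1 Hg2 Pm)
    as [Hm [x [xh [K [Cx [Cxh [Hne [Hdiff [HaX HaB]]]]]]]]].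
  exists (sqrt (INR m)), (sqrt (INR m)).
  assert (LB : forall x xh K, CMcode q d g1 g2 x -> CMcode q d g1 g2 xh -> x <> xh ->
     diff_within x xh K -> sqrt (INR m) <= aX d x xh K /\ sqrt (INR m) <= aB d x xh K).
  { intros x1 xh1 K1 C1 C2 N1 D1.
    destruct (lower q d g1 g2 x1 xh1 K1 Hd Hq C1 C2 N1 D1) as [n [En [Hn [L1 L2]]]].
    assert (Hmn : (m <= n)%nat) by (apply Hmin; exists x1, xh1, K1; auto).
    apply le_INR in Hmn. apply sqrt_le_1_alt in Hmn. lra. }
  split; [|split].
  - split; [exists x, xh, K; auto|]. intros; apply LB; auto.
  - split; [exists x, xh, K; auto|]. intros; apply LB; auto.
  - unfold Loss, log10.
    assert (Hs : 0 < sqrt (INR m)) by (apply sqrt_lt_R0; lra).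
    replace (sqrt (INR m) / sqrt (INR m)) with 1 by (field; lra).
    rewrite ln_1. unfold Rdiv. ring.
Qed.
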